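(* Fix a master $m$, a finite nonempty set $\Omega_m$ of workers, and for each $n\in\Omega_m$ parameters $u_{m,n}>0$, $a_{m,n}>0$, and let $L_m>0$. Then the optimization problem $$\min_{\{l_{m,n}\}_{n\in\Omega_m},\,t_m} \; t_m \quad\text{s.t.}\quad L_m-\sum_{n\in\Omega_m} l_{m,n}\left(1-e^{-\frac{u_{m,n}}{l_{m,n}}\left(t_m-a_{m,n}l_{m,n}\right)}\right)\le 0,\qquad l_{m,n}\ge 0\ \ \forall n\in\Omega_m,$$ is a convex optimization problem. (Here the constraint function is considered on the domain $l_{m,n}>0$.)
   Context: This is the load-allocation problem for a single master $m$ in a coded distributed computing system: master $m$ must obtain $L_m$ MDS-coded row-vector products, worker $n\in\Omega_m$ is allocated $l_{m,n}$ coded rows, and the processing time of worker $n$ on $l$ rows is a shifted exponential random variable $T$ with $\mathbb{P}[T\le t]=1-e^{-\frac{u_{m,n}}{l}(t-a_{m,n}l)}$ for $t\ge a_{m,n}l$ (and $0$ otherwise). The sum in the constraint is the expected number of results received by time $t_m$ (in the regime $t_m\ge a_{m,n}l_{m,n}$), and $t_m$ is the approximate completion time. *)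

(* Defs.v *)
From HB Require Import structures.
From mathcomp Require Import all_boot all_order all_algebra.
From mathcomp Require Import all_classical all_reals all_analysis.
Set Implicit Arguments. Unset Strict Implicit. Unset Printing Implicit Defensive.
Import Order.TTheory GRing.Theory Num.Theory.
Local Open Scope ring_scope.

(* A decision point: loads l = (l_n)_{n : 'I_k} together with the time t. *)
Definition point (R : realType) (k : nat) : Type := (('I_k -> R) * R)%type.

Definition comb (R : realType) (k : nat) (th : R) (x y : point R k) : point R k :=
  (fun i => th * x.1 i + (1 - th) * y.1 i, th * x.2 + (1 - th) * y.2).

Definition convex_set_pt (R : realType) (k : nat) (D : point R k -> Prop) : Prop :=
  forall x y th, D x -> D y -> 0 <= th <= 1 -> D (comb th x y).

Definition convex_fun_on (R : realType) (k : nat) (D : point R k -> Prop)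
    (f : point R k -> R) : Prop :=
  forall x y th, D x -> D y -> 0 <= th <= 1 ->
    f (comb th x y) <= th * f x + (1 - th) * f y.

(* A problem  min f  s.t.  g_j <= 0 (j : I), on domain D, is a convex
   optimization problem: D convex, objective and all inequality-constraint
   functions convex on D (no equality constraints here). *)
Definition convex_program (R : realType) (k : nat) (D : point R k -> Prop)
    (f : point R k -> R) (I : Type) (g : I -> point R k -> R) : Prop :=
  [/\ convex_set_pt D, convex_fun_on D f & forall j, convex_fun_on D (g j)].

Definition load_domain (R : realType) (k : nat) (x : point R k) : Prop :=
  forall i, 0 < x.1 i.

Definition objective (R : realType) (k : nat) (x : point R k) : R := x.2.

Definition load_constraint (R : realType) (k : nat) (L : R) (u a : 'I_k -> R)
    (x : point R k) : R :=
  L - \sum_(i < k) x.1 i * (1 - expR (- (u i / x.1 i) * (x.2 - a i * x.1 i))).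

(* All constraints, in the form g <= 0: the load constraint (None) and
   -l_n <= 0 for each worker n (Some n). *)
Definition constraints (R : realType) (k : nat) (L : R) (u a : 'I_k -> R)
    (j : option 'I_k) (x : point R k) : R :=
  match j with
  | None => load_constraint L u a x
  | Some n => - x.1 n
  end.

(* Main.v *)
Require Import Defs.
From HB Require Import structures.
From mathcomp Require Import all_boot all_order all_algebra.
From mathcomp Require Import all_classical all_reals all_analysis.
From mathcomp Require Import ring lra.
Import Order.TTheory GRing.Theory Num.Theory.
Local Open Scope ring_scope.

Lemma exp_tangent (R : realType) (z w : R) : expR w * (1 + z - w) <= expR z.
Proof.
have -> : expR z = expR w * expR (z - w) by rewrite -expRD; congr expR; ring.
rewrite -addrA ler_wpM2l ?expR_ge0 //; exact: expR_ge1Dx.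
Qed.

Lemma term_convex (R : realType) (l1 l2 th u a t1 t2 : R) :
  0 < l1 -> 0 < l2 -> 0 <= th <= 1 ->
  (th * l1 + (1 - th) * l2) *
    expR (- (u / (th * l1 + (1 - th) * l2)) *
          ((th * t1 + (1 - th) * t2) - a * (th * l1 + (1 - th) * l2)))
  <= th * (l1 * expR (- (u / l1) * (t1 - a * l1))) +
     (1 - th) * (l2 * expR (- (u / l2) * (t2 - a * l2))).
Proof.
move=> h1 h2 /andP[th0 th1].
have lpos : 0 < th * l1 + (1 - th) * l2.
  case: (boolP (th == 0)) => [/eqP ->|thn0]; first by rewrite subr0 !mul1r mul0r add0r.
  have : 0 < th * l1 by rewrite mulr_gt0 // lt_neqAle eq_sym thn0.
  have : 0 <= (1 - th) * l2 by rewrite mulr_ge0 // ?subr_ge0 // ltW.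
  lra.
set l := th * l1 + (1 - th) * l2.
set z1 := - (u / l1) * (t1 - a * l1).
set z2 := - (u / l2) * (t2 - a * l2).
set w := - (u / l) * _.
have key : l * w = th * l1 * z1 + (1 - th) * l2 * z2.
  rewrite /w /z1 /z2 /l; field.
  by rewrite (lt0r_neq0 h1) (lt0r_neq0 h2) (lt0r_neq0 lpos).
have k1 := @exp_tangent R z1 w.
have k2 := @exp_tangent R z2 w.
have e1 : 0 <= th * l1 by rewrite mulr_ge0 // ltW.
have e2 : 0 <= (1 - th) * l2 by rewrite mulr_ge0 // ?subr_ge0 // ltW.
have m1 := ler_wpM2l e1 k1.
have m2 := ler_wpM2l e2 k2.
have eq : th * l1 * (expR w * (1 + z1 - w)) + (1 - th) * l2 * (expR w * (1 + z2 - w))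
   = l * expR w.
  transitivity (expR w * (l + (th * l1 * z1 + (1 - th) * l2 * z2) - l * w)).
    by rewrite /l; ring.
  by rewrite -key; ring.
rewrite -eq; apply: lerD; [move: m1|move: m2]; by rewrite !mulrA.
Qed.

Theorem lemma1 (R : realType) (k : nat) (L : R) (u a : 'I_k -> R) :
  (0 < k)%N -> (forall n, 0 < u n) -> (forall n, 0 < a n) -> 0 < L ->
  convex_program (@load_domain R k) (@objective R k) (constraints L u a).
Proof.
move=> _ _ _ _; split.
- move=> x y th hx hy /andP[th0 th1] i /=.
  have h1 := hx i; have h2 := hy i.
  case: (boolP (th == 0)) => [/eqP ->|thn0]; first by rewrite subr0 !mul1r mul0r add0r.
  have : 0 < th * x.1 i by rewrite mulr_gt0 // lt_neqAle eq_sym thn0.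
  have : 0 <= (1 - th) * y.1 i by rewrite mulr_ge0 // ?subr_ge0 // ltW.
  lra.
- by move=> x y th _ _ _; rewrite /objective /=.
- case=> [n|] x y th hx hy hth /=; first by rewrite le_eqVlt; apply/orP; left; apply/eqP; ring.
  rewrite /load_constraint /=.
  have -> : th * (L - \sum_(i < k) x.1 i * (1 - expR (- (u i / x.1 i) * (x.2 - a i * x.1 i)))) +
    (1 - th) * (L - \sum_(i < k) y.1 i * (1 - expR (- (u i / y.1 i) * (y.2 - a i * y.1 i))))
    = L - \sum_(i < k) (th * (x.1 i * (1 - expR (- (u i / x.1 i) * (x.2 - a i * x.1 i)))) +
        (1 - th) * (y.1 i * (1 - expR (- (u i / y.1 i) * (y.2 - a i * y.1 i))))).
    rewrite big_split /= -!mulr_sumr; ring.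
  rewrite lerD2l lerN2; apply: ler_sum => i _.
  have := @term_convex R (x.1 i) (y.1 i) th (u i) (a i) x.2 y.2 (hx i) (hy i) hth.
  set E := expR (- (u i / _) * _).
  set E1 := expR (- (u i / x.1 i) * _).
  set E2 := expR (- (u i / y.1 i) * _).
  move=> H.
  have -> : th * (x.1 i * (1 - E1)) + (1 - th) * (y.1 i * (1 - E2)) =
    (th * x.1 i + (1 - th) * y.1 i) - (th * (x.1 i * E1) + (1 - th) * (y.1 i * E2)) by ring.
  have -> : (th * x.1 i + (1 - th) * y.1 i) * (1 - E) =
    (th * x.1 i + (1 - th) * y.1 i) - (th * x.1 i + (1 - th) * y.1 i) * E by ring.
  by rewrite lerD2l lerN2.
Qed.
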